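(* For every $\bm r\in\mathbb{Z}^N\setminus\{\bm0\}$, the space of derivations of $\mathcal{H}_N'$ of degree $\bm r$ equals $\operatorname{ad}(\mathbb{K}h_{\bm r})$; that is, every derivation $\partial$ of $\mathcal{H}_N'$ with $\partial(\mathbb{K}h_{\bm s})\subseteq\mathbb{K}h_{\bm s+\bm r}$ for all $\bm s\in\mathbb{Z}^N$ is of the form $\operatorname{ad}(c\,h_{\bm r})$ for some $c\in\mathbb{K}$.
   Context: $\mathbb{K}$ is an algebraically closed field of characteristic zero, $N=2m\ge2$ even, $(\cdot,\cdot)$ the bilinear form on $\mathbb{K}^N$ with $(e_i,e_j)=\delta_{ij}$. Let $A_N=\mathbb{K}[t_1^{\pm1},\dots,t_N^{\pm1}]$, $d_i=t_i\frac{\partial}{\partial t_i}$, $t^{\bm r}=t_1^{r_1}\cdots t_N^{r_N}$, $D(u,\bm r)=\sum_i u_it^{\bm r}d_i$. Let $\bm J=\begin{pmatrix} O_m & I_m\\ -I_m & O_m\end{pmatrix}$, $\overline{\bm r}=\bm J\bm r$, $h_{\bm r}=D(\overline{\bm r},\bm r)$ (so $h_{\bm0}=0$). $\mathcal{H}_N'=\operatorname{span}_{\mathbb{K}}\{h_{\bm r}:\bm r\in\mathbb{Z}^N\setminus\{\bm0\}\}$ is the Lie algebra with bracket $[h_{\bm r},h_{\bm s}]=(\overline{\bm r},\bm s)h_{\bm r+\bm s}$, $\mathbb{Z}^N$-graded with degree-$\bm s$ component $\mathbb{K}h_{\bm s}$. *)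

(* Defs.v *)
From HB Require Import structures.
From mathcomp Require Import all_boot all_order all_algebra.
Set Implicit Arguments. Unset Strict Implicit. Unset Printing Implicit Defensive.
Import Order.TTheory GRing.Theory Num.Theory.
Local Open Scope ring_scope.

(* Z^N with N = m + m = 2m, realised as integer row vectors. *)
Notation ZN m := 'rV[int]_(m + m).

Definition zform (n : nat) (a b : 'rV[int]_n) : int := \sum_(i < n) a 0 i * b 0 i.

(* rbar = J r with J = [[O, I]; [-I, O]] : (J r) = (r_2, -r_1) where r = (r_1, r_2) *)
Definition Jbar (m : nat) (r : ZN m) : ZN m := row_mx (rsubmx r) (- lsubmx r).

Definition is_HN' (K : fieldType) (m : nat) (L : lmodType K)
    (h : ZN m -> L) (br : L -> L -> L) : Prop :=
  [/\ h 0 = 0,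
      forall x : L, exists (s : seq (ZN m)) (c : ZN m -> K),
        x = \sum_(r <- s) c r *: h r,
      forall (s : seq (ZN m)) (c : ZN m -> K),
        uniq s -> all (fun r => r != 0) s ->
        \sum_(r <- s) c r *: h r = 0 -> forall r, r \in s -> c r = 0,
      (forall (a : K) (x y z : L), br (a *: x + y) z = a *: br x z + br y z) /\
      (forall (a : K) (x y z : L), br z (a *: x + y) = a *: br z x + br z y) &
      forall r s : ZN m, br (h r) (h s) = (zform (Jbar r) s)%:~R *: h (r + s)].

Definition is_derivation (K : fieldType) (L : lmodType K) (br : L -> L -> L)
    (d : L -> L) : Prop :=
  (forall (a : K) (x y : L), d (a *: x + y) = a *: d x + d y) /\
  (forall x y : L, d (br x y) = br (d x) y + br x (d y)).

Definition has_degree (K : fieldType) (m : nat) (L : lmodType K)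
    (h : ZN m -> L) (d : L -> L) (r : ZN m) : Prop :=
  forall s : ZN m, exists a : K, d (h s) = a *: h (s + r).

(* Main.v *)
Require Import Defs.
From HB Require Import structures.
From mathcomp Require Import all_boot all_order all_algebra.
From mathcomp Require Import ring.
Import GRing.Theory Num.Theory.
Local Open Scope ring_scope.

Lemma intr_neq0_char0 (K : fieldType) (z : int) :
  [pchar K] =i pred0 -> z != 0 -> (z%:~R : K) != 0.
Proof.
move=> /pcharf0P Hc; case: z => n; rewrite ?NegzE ?mulrNz /=.
  by rewrite Hc.
by rewrite oppr_eq0 Hc.
Qed.

Definition om {m} (p q : ZN m) : int := zform (Jbar p) q.

Lemma omE m (p q : ZN m) : om p q =
  \sum_(i < m) (p 0 (rshift m i) * q 0 (lshift m i) - p 0 (lshift m i) * q 0 (rshift m i)).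
Proof.
rewrite /om /zform big_split_ord /= sumrB; congr (_ + _).
  by apply: eq_bigr => i _; rewrite /Jbar row_mxEl mxE.
by rewrite -sumrN; apply: eq_bigr => i _; rewrite /Jbar row_mxEr !mxE mulNr.
Qed.

Lemma omDl m (p q t : ZN m) : om (p + q) t = om p t + om q t.
Proof. rewrite !omE -big_split; apply: eq_bigr => i _; rewrite !mxE /=; ring. Qed.
Lemma omDr m (p q t : ZN m) : om t (p + q) = om t p + om t q.
Proof. rewrite !omE -big_split; apply: eq_bigr => i _; rewrite !mxE /=; ring. Qed.
Lemma omss m (p : ZN m) : om p p = 0.
Proof. rewrite omE big1 // => i _; ring. Qed.

Lemma om_nz m (r : ZN m) : r != 0 -> om r (Jbar r) != 0.
Proof.
move=> rnz; rewrite /om /zform.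
have Jnz : Jbar r != 0.
  apply: contra rnz => /eqP J0.
  rewrite /Jbar -(row_mx0 _ 1 m m) in J0.
  case: (eq_row_mx J0) => R0 /eqP; rewrite oppr_eq0 => /eqP L0.
  by rewrite -(hsubmxK r) R0 L0 row_mx0.
apply: contra Jnz => /eqP S0; apply/eqP/matrixP => i j.
rewrite (ord1 i) [RHS]mxE.
have: \sum_(i < m + m) Jbar r 0 i * Jbar r 0 i == 0 by rewrite S0.
rewrite psumr_eq0; last by move=> k _; rewrite -expr2 sqr_ge0.
move=> /allP /(_ j (mem_index_enum j)) /=.
by rewrite mulf_eq0 orbb => /eqP.
Qed.
Lemma core (K : fieldType) (V : zmodType) (W : V -> V -> K) (a : V -> K) (r v : V) :
  (forall p q t, W (p+q) t = W p t + W q t) ->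
  (forall t p q, W t (p+q) = W t p + W t q) ->
  (forall s, W s s = 0) ->
  (2 : K) != 0 ->
  a 0 = 0 ->
  (forall s t, s + t + r != 0 -> W s t * a (s+t) = a s * W (s+r) t + a t * W s (t+r)) ->
  W r v != 0 ->
  forall s, s + r != 0 -> a s = a v / W r v * W r s.
Proof.
move=> WDl WDr Wss two0 a0 Ea vnz.
have W0l t : W 0 t = 0.
  by have := WDl 0 0 t; rewrite addr0 => /(congr1 (fun z => z - W 0 t)); rewrite subrr addrK.
have W0r t : W t 0 = 0.
  by have := WDr t 0 0; rewrite addr0 => /(congr1 (fun z => z - W t 0)); rewrite subrr addrK.
have WNl p t : W (-p) t = - W p t.
  by apply/eqP; rewrite -addr_eq0 addrC -WDl subrr W0l.
have WNr p t : W t (-p) = - W t p.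
  by apply/eqP; rewrite -addr_eq0 addrC -WDr subrr W0r.
have Wa s t : W s t = - W t s.
  have := Wss (s + t); rewrite WDl !WDr !Wss add0r addr0 => /eqP.
  by rewrite addr_eq0 => /eqP.
have rnz : r != 0 by apply: contra vnz => /eqP ->; rewrite W0l.
pose c := a v / W r v.
pose b s := a s - c * W r s.
have E' s t : s + t + r != 0 -> W s t * (b (s+t) - b s - b t) = b s * W r t - b t * W r s.
  move=> H; have E := Ea s t H; rewrite WDl WDr (Wa s r) in E.
  rewrite /b /= WDr.
  transitivity ((W s t * a (s + t) - (a s * (W s t + W r t) + a t * (W s t + - W r s)))
     + ((a s - c * W r s) * W r t - (a t - c * W r t) * W r s)); first by ring.
  by rewrite E subrr add0r.
have b0 : b 0 = 0 by rewrite /b a0 W0r mulr0 subrr.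
have bv : b v = 0 by rewrite /b /c divfK // subrr.
have neg u : W r u != 0 -> b u = 0 -> b (-u) = 0.
  move=> nu bu; have := E' u (-u); rewrite subrr add0r => /(_ rnz).
  rewrite b0 bu WNr Wss oppr0 !mul0r add0r => /eqP.
  by rewrite eq_sym oppr_eq0 mulf_eq0 (negbTE nu) orbF => /eqP.
have ur u : W r u != 0 -> u + r != 0.
  move=> nu; apply: contra nu; rewrite addr_eq0 => /eqP ->.
  by rewrite WNr Wss oppr0.
have dbl u : W r u != 0 -> b u = 0 -> b (u + u) = 0.
  move=> nu bu; have bn := neg u nu bu.
  have := E' (-u) (u + u); rewrite addrA addNr add0r => /(_ (ur u nu)).
  rewrite WNl WDr Wss addr0 oppr0 bn !mul0r add0r WNr mulrN opprK => /eqP.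
  by rewrite eq_sym mulf_eq0 (negbTE nu) orbF => /eqP.
have mainv u s : W r u != 0 -> b u = 0 -> b (u + u) = 0 -> s + r != 0 ->
    s + u + r != 0 -> b s = 0.
  move=> nu bu buu sr sur.
  have e1 := E' s u sur; rewrite bu in e1.
  have e3 := E' (s - u) u; rewrite subrK in e3; have {}e3 := e3 sr.
  rewrite bu WDl WNl Wss subr0 in e3.
  have e4 := E' (s - u) (u + u); rewrite addrA subrK in e4; have {}e4 := e4 sur.
  rewrite buu !WDr WDl WNl Wss subr0 in e4.
  have e4' : W s u * (b (s + u) - b (s - u)) = W r u * b (s - u).
    apply/eqP; rewrite -subr_eq0; apply/eqP.
    have : 2 * (W s u * (b (s + u) - b (s - u)) - W r u * b (s - u)) = 0.
      transitivity ((W s u + W s u) * (b (s + u) - b (s - u) - 0) -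
                    (b (s - u) * (W r u + W r u) - 0 * (W r s + W r (- u))));
        first by ring.
      by rewrite e4 subrr.
    by move/eqP; rewrite mulf_eq0 (negbTE two0) /= => /eqP.
  apply/eqP; rewrite -(mulIr_eq0 _ (mulIf nu)); apply/eqP.
  transitivity ((W s u * (b (s + u) - b (s - u)) - W r u * b (s - u))
     - (W s u * (b s - b (s - u) - 0) - (b (s - u) * W r u - 0 * W r (s - u)))
     - (W s u * (b (s + u) - b s - 0) - (b s * W r u - 0 * W r s))); first by ring.
  by rewrite e4' e3 e1 !subrr ?subr0 ?add0r ?addr0.
move=> s sr; apply/eqP; rewrite -subr_eq0; apply/eqP; rewrite -/(b s).
have [svr|svr] := eqVneq (s + v + r) 0; last by apply: (mainv v) => //; apply: dbl.
have nv : W r (- v) != 0 by rewrite WNr oppr_eq0.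
apply: (mainv (-v)) => //; first exact: neg.
  by apply: dbl => //; exact: neg.
apply: contra vnz => /eqP svr'.
have h1 := congr1 (W r) svr; have h2 := congr1 (W r) svr'.
rewrite !WDr W0r in h1; rewrite !WDr WNr W0r in h2.
have : 2 * W r v = 0.
  transitivity ((W r s + W r v + W r r) - (W r s + - W r v + W r r)); first by ring.
  by rewrite h1 h2 subrr.
by move/eqP; rewrite mulf_eq0 (negbTE two0).
Qed.

Theorem lemma4p3 (K : closedFieldType) (m : nat) (L : lmodType K)
    (h : ZN m -> L) (br : L -> L -> L) :
  [pchar K] =i pred0 -> (0 < m)%N ->
  is_HN' h br ->
  forall (r : ZN m), r != 0 ->
  forall d : L -> L, is_derivation br d -> has_degree h d r ->
  exists c : K, forall x : L, d x = br (c *: h r) x.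
Proof.
move=> Hc _ [h0 Hspan Hind [BrL BrR] Hbr] r rnz d [dlin dder] Hdeg.
pose W (p q : ZN m) : K := (om p q)%:~R.
have Hbr' p q : br (h p) (h q) = W p q *: h (p + q) by exact: Hbr.
have uniq1 u X Y : u != 0 -> X *: h u = Y *: h u -> X = Y.
  move=> unz E; apply/eqP; rewrite -subr_eq0; apply/eqP.
  apply: (Hind [:: u] (fun _ => X - Y)) => //=; first by rewrite andbT.
    by rewrite big_seq1 scalerBl E subrr.
  by rewrite mem_seq1.
have d0 : d 0 = 0.
  have := dlin 1 0 0; rewrite !scale1r addr0 => /(congr1 (fun z => z - d 0)).
  by rewrite subrr addrK.
have dZ a x : d (a *: x) = a *: d x by rewrite -[a *: x]addr0 dlin d0 addr0.
have dD x y : d (x + y) = d x + d y by have := dlin 1 x y; rewrite !scale1r.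
have br0l z : br 0 z = 0.
  have := BrL 1 0 0 z; rewrite !scale1r addr0 => /(congr1 (fun w => w - br 0 z)).
  by rewrite subrr addrK.
have br0r z : br z 0 = 0.
  have := BrR 1 0 0 z; rewrite !scale1r addr0 => /(congr1 (fun w => w - br z 0)).
  by rewrite subrr addrK.
have brZl a x z : br (a *: x) z = a *: br x z by rewrite -[a *: x]addr0 BrL br0l addr0.
have brZr a x z : br z (a *: x) = a *: br z x by rewrite -[a *: x]addr0 BrR br0r addr0.
have brDr x y z : br z (x + y) = br z x + br z y by have := BrR 1 x y z; rewrite !scale1r.
have [a Ha] : exists a : ZN m -> K, forall s, d (h s) = a s *: h (s + r).
  have ex s : exists a, d (h s) == a *: h (s + r) by have [a ->] := Hdeg s; exists a.
  by exists (fun s => xchoose (ex s)) => s; apply/eqP/(xchooseP (ex s)).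
have a0 : a 0 = 0.
  apply: (uniq1 r) => //; rewrite scale0r -[r]add0r -Ha h0 d0 //.
have two0 : (2 : K) != 0 by move/pcharf0P: Hc => ->.
have Ea s t : s + t + r != 0 -> W s t * a (s+t) = a s * W (s+r) t + a t * W s (t+r).
  move=> H; apply: (uniq1 _ _ _ H).
  have := dder (h s) (h t).
  rewrite Hbr' dZ !Ha brZl brZr !Hbr' !scalerA (addrAC s r t) (addrA s t r) => ->.
  by rewrite scalerDl.
have vnz : W r (Jbar r) != 0 by apply: intr_neq0_char0 => //; exact: om_nz.
have WDl p q t : W (p + q) t = W p t + W q t by rewrite /W omDl intrD.
have WDr t p q : W t (p + q) = W t p + W t q by rewrite /W omDr intrD.
have Wss p : W p p = 0 by rewrite /W omss.
have key := @core _ _ W a r (Jbar r) WDl WDr Wss two0 a0 Ea vnz.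
exists (a (Jbar r) / W r (Jbar r)) => x.
have [s [cf ->]] := Hspan x.
elim: s => [|u s IH]; first by rewrite !big_nil d0 br0r.
rewrite !big_cons dD brDr IH dZ brZr; congr (_ *: _ + _).
rewrite Ha brZl Hbr' scalerA (addrC r u).
have [ur|ur] := eqVneq (u + r) 0; first by rewrite ur h0 !scaler0.
by rewrite -key.
Qed.
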